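(* Let $G=(V,E)$ be a loopless multigraph with $n$ vertices, $m$ edges and maximum degree $\Delta$. Then there are $\Delta$ spanning forests $F_1,\dots,F_\Delta$ on vertex set $V$, each having either $\lceil m/\Delta\rceil$ or $\lfloor m/\Delta\rfloor$ edges, whose edge sets partition $E$.
   Context: Forests may have no edges; a forest in a multigraph contains no cycles (in particular no two parallel edges). *)

(* Defs.v *)
From mathcomp Require Import all_boot.
Set Implicit Arguments. Unset Strict Implicit. Unset Printing Implicit Defensive.

(* A multigraph: finite vertex type V, finite edge type E, and an endpoint map
   ends : E -> V * V (orientation irrelevant). Parallel edges are distinct
   elements of E with the same endpoints. *)

Definition loopless (V E : finType) (ends : E -> V * V) : Prop :=
  forall e : E, (ends e).1 != (ends e).2.

Definition joins (V E : finType) (ends : E -> V * V) (e : E) (u w : V) : bool :=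
  ((ends e).1 == u) && ((ends e).2 == w) || ((ends e).1 == w) && ((ends e).2 == u).

Definition deg (V E : finType) (ends : E -> V * V) (v : V) : nat :=
  #|[set e : E | ((ends e).1 == v) || ((ends e).2 == v)]|.

Definition maxdeg (V E : finType) (ends : E -> V * V) : nat :=
  \max_(v : V) deg ends v.

(* A cycle: distinct edges e_0..e_{k-1} (k >= 1) and distinct vertices
   v_0..v_{k-1} with e_i joining v_i and v_{i+1 mod k}. For k = 2 this is a
   pair of parallel edges. *)
Definition is_cycle (V E : finType) (ends : E -> V * V) (es : seq E) (vs : seq V) : bool :=
  [&& 0 < size es, size vs == size es, uniq es, uniq vs &
      all (fun p => joins ends p.1 p.2.1 p.2.2) (zip es (zip vs (rot 1 vs)))].

Definition is_forest (V E : finType) (ends : E -> V * V) (F : {set E}) : Prop :=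
  ~ exists (es : seq E) (vs : seq V), is_cycle ends es vs /\ all (fun e => e \in F) es.

(* Main.v *)
Require Import Defs.
From mathcomp Require Import all_boot zify.
Lemma count_small d i m : m <= d ->
  count (fun t => t %% d == i) (iota 0 m) = (i < m).
Proof.
elim: m => [|m IHm] hm //.
rewrite -addn1 iotaD count_cat IHm ?(ltnW hm) //= add0n modn_small //.
rewrite addn0; case: (ltngtP i m) => h; case: (m =P i) => h'; lia.
Qed.

Lemma count_mod_iota d i m : 0 < d -> i < d ->
  count (fun t => t %% d == i) (iota 0 m) = m %/ d + (i < m %% d).
Proof.
move=> d0 id; elim/ltn_ind: m => m IH.
case: (ltnP m d) => hm.
  by rewrite divn_small // modn_small // add0n count_small // ltnW.
have ->: m = d + (m - d) by rewrite subnKC.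
rewrite iotaD count_cat.
have -> : iota (0 + d) (m - d) = map (addn d) (iota 0 (m-d)) by rewrite -iotaDl addn0.
rewrite count_map.
have ->: count (preim (addn d) (fun t => t %% d == i)) (iota 0 (m - d)) =
         count (fun t => t %% d == i) (iota 0 (m - d)).
  by apply: eq_count => t /=; rewrite addnC modnDr.
rewrite (IH (m - d)); last by lia.
rewrite count_small // id.
rewrite divnDl ?dvdnn // divnn d0 modnDl; lia.
Qed.

Lemma ceil_eq d m : 0 < d -> 0 < m %% d -> (m + d - 1) %/ d = m %/ d + 1.
Proof.
move=> d0 r0.
have ->: m + d - 1 = m %/ d * d + (d + (m %% d - 1)).
  by rewrite {1}(divn_eq m d); lia.
rewrite divnMDl // divnDl ?dvdnn // divnn d0 (@divn_small (m %% d - 1)); first lia.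
have := ltn_pmod m d0; lia.
Qed.

Lemma nth_rot1 (T : Type) (x0 : T) (s : seq T) j : j < size s ->
  nth x0 (rot 1 s) j = nth x0 s ((j + 1) %% size s).
Proof.
case: s => [|x t] //= hj; rewrite rot1_cons nth_rcons.
case: ltngtP => h.
- by rewrite modn_small ?addn1 //.
- lia.
- by rewrite h addn1 modnn.
Qed.

Section S.
Variables (V E : finType) (ends : E -> V * V).

Definition rk (v : V) : nat := enum_rank v.
Definition key (e : E) := maxn (rk (ends e).1) (rk (ends e).2).
Definition leK := fun e f : E => key e <= key f.
Definition sq := sort leK (enum E).

Lemma sq_perm : perm_eq sq (enum E).
Proof. by rewrite /sq perm_sort perm_refl. Qed.

Lemma sq_uniq : uniq sq.
Proof. by rewrite (perm_uniq sq_perm) enum_uniq. Qed.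

Lemma mem_sq e : e \in sq.
Proof. by rewrite (perm_mem sq_perm) mem_enum. Qed.

Lemma size_sq : size sq = #|E|.
Proof. by rewrite (perm_size sq_perm) cardE. Qed.

Lemma sq_sorted : sorted leK sq.
Proof. by apply: sort_sorted => e f; rewrite /leK leq_total. Qed.

Lemma key_mono x0 t1 t2 : t1 <= t2 -> t2 < size sq ->
  key (nth x0 sq t1) <= key (nth x0 sq t2).
Proof.
move=> h12 h2.
have := @sorted_leq_nth _ leK _ _ x0 sq sq_sorted t1 t2.
apply; rewrite ?inE //; last exact: leq_ltn_trans h2.
- by move=> a b c; rewrite /leK; apply: leq_trans.
- by move=> a; rewrite /leK.
Qed.

Lemma deg_le v : deg ends v <= maxdeg ends.
Proof. exact: (@leq_bigmax _ (fun v => deg ends v) v). Qed.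

Lemma key_bound e : #|[set f | key f == key e]| <= maxdeg ends.
Proof.
have [v hv] : exists v, key e = rk v.
  rewrite /key; case: (leqP (rk (ends e).1) (rk (ends e).2)) => h.
    by exists (ends e).2.
  by exists (ends e).1.
apply: leq_trans (deg_le v); apply: subset_leq_card; apply/subsetP => f.
rewrite !inE hv /key; case: (leqP (rk (ends f).1) (rk (ends f).2)) => h.
  move=> /eqP /ord_inj /enum_rank_inj ->; by rewrite eqxx orbT.
move=> /eqP /ord_inj /enum_rank_inj ->; by rewrite eqxx.
Qed.

Lemma gap x0 t1 t2 : t1 < t2 -> t2 < size sq ->
  key (nth x0 sq t1) = key (nth x0 sq t2) -> t2 - t1 < maxdeg ends.
Proof.
move=> h12 h2 hk.
pose f (j : 'I_(t2 - t1).+1) := nth x0 sq (t1 + j).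
have fi : injective f.
  move=> a b /eqP; rewrite /f nth_uniq ?sq_uniq //.
  - by move/eqP => h; apply: ord_inj; lia.
  - apply: leq_trans h2; have := ltn_ord a; lia.
  - apply: leq_trans h2; have := ltn_ord b; lia.
have := key_bound (nth x0 sq t1).
apply: leq_trans.
have <- : #|[set f j | j in 'I_(t2 - t1).+1]| = (t2 - t1).+1.
  by rewrite card_imset // card_ord.
apply: subset_leq_card; apply/subsetP => g /imsetP [j _ ->].
have hj := ltn_ord j.
have hs : t1 + j < size sq by apply: leq_trans h2; lia.
rewrite inE eqn_leq; apply/andP; split.
  by rewrite hk; apply: key_mono => //; lia.
by apply: key_mono => //; lia.
Qed.

Lemma color_distinct e f : e != f -> key e = key f ->
  index e sq %% maxdeg ends = index f sq %% maxdeg ends -> False.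
Proof.
move=> ef.
wlog lt : e f ef / index e sq < index f sq.
  move=> W hk hc; case: (ltngtP (index e sq) (index f sq)) => h.
  - exact: W hk hc.
  - by apply: (W f e) => //; rewrite eq_sym.
  - by move: ef; rewrite -(nth_index e (mem_sq e)) h nth_index ?mem_sq ?eqxx.
move=> hk hc.
have hf : index f sq < size sq by rewrite index_mem mem_sq.
have := @gap e (index e sq) (index f sq) lt hf.
rewrite !nth_index ?mem_sq // => /(_ hk) hg.
have : maxdeg ends %| index f sq - index e sq.
  by rewrite -eqn_mod_dvd ?(ltnW lt) // hc.
move/dvdn_leq; rewrite subn_gt0 lt => /(_ isT); lia.
Qed.

Lemma key_joins e u w : joins ends e u w -> key e = maxn (rk u) (rk w).
Proof.
rewrite /joins /key => /orP [/andP [/eqP -> /eqP ->] | /andP [/eqP -> /eqP ->]] //.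
by rewrite maxnC.
Qed.

Lemma forestF (i : nat) : loopless ends ->
  is_forest ends [set e | index e sq %% maxdeg ends == i].
Proof.
move=> hl [es [vs [hc hall]]].
case/and5P: hc; case: es hall => [|e0 es'] // hall _ /eqP svs ues uvs hz.
set es := e0 :: es' in hall svs ues hz *.
set k := size es.
have k0 : 0 < k by [].
have hksz : size es = k by [].
clearbody k.
pose v0 := (ends e0).1.
have Hj : forall j, j < k -> joins ends (nth e0 es j) (nth v0 vs j) (nth v0 vs ((j + 1) %% k)).
  move=> j hj.
  have := (all_nthP (e0, (v0, v0)) hz) j.
  rewrite !size_zip size_rot svs !minnn hksz => /(_ hj).
  rewrite nth_zip /=; last by rewrite size_zip size_rot svs minnn.
  rewrite nth_zip /=; last by rewrite size_rot.
  by rewrite nth_rot1 ?svs ?hksz.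
have [j hj] := @eq_bigmax _ (fun j : 'I_k => rk (nth v0 vs j)) (ltac:(by rewrite card_ord)).
case: j hj => j hjk /= hj.
have Hmax : forall a, a < k -> rk (nth v0 vs a) <= rk (nth v0 vs j).
  move=> a ha; rewrite -hj; exact: (@leq_bigmax _ (fun j : 'I_k => rk (nth v0 vs j)) (Ordinal ha)).
pose j' := if j == 0 then k - 1 else j - 1.
have hj' : j' < k by rewrite /j'; case: eqP => _; lia.
have hj'1 : (j' + 1) %% k = j.
  rewrite /j'; case: eqP => h.
    by rewrite subnK // modnn h.
  rewrite subnK ?modn_small //; lia.
have k1 : key (nth e0 es j) = rk (nth v0 vs j).
  by rewrite (@key_joins _ _ _ (Hj j hjk)); apply/maxn_idPl; apply: Hmax; rewrite ltn_pmod.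
have k2 : key (nth e0 es j') = rk (nth v0 vs j).
  by rewrite (@key_joins _ _ _ (Hj j' hj')) hj'1; apply/maxn_idPr; apply: Hmax.
have inF : forall a, a < k -> index (nth e0 es a) sq %% maxdeg ends = i.
  move=> a ha; have ha' : a < size es by rewrite hksz.
  by move/allP: hall => /(_ _ (mem_nth e0 ha')); rewrite inE => /eqP.
case: (eqVneq j' j) => hjj.
  have kk : k = 1 by move: hjj; rewrite /j'; case: eqP => h; lia.
  have j0 : j = 0 by lia.
  have := Hj j hjk; rewrite kk modn1 j0.
  have := hl (nth e0 es 0) => hne.
  by rewrite /joins => /orP [] /andP [/eqP h1 /eqP h2]; rewrite h1 h2 eqxx in hne.
apply: (@color_distinct (nth e0 es j) (nth e0 es j')).
- by rewrite nth_uniq ?hksz // eq_sym.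
- by rewrite k1 k2.
- by rewrite inF // inF.
Qed.

End S.
Arguments sq {V E} ends.
Arguments sq_perm {V E} ends.
Arguments sq_uniq {V E} ends.
Arguments size_sq {V E} ends.
Arguments deg_le {V E} ends v.
Arguments forestF {V E} ends i.

Lemma count_index (T : eqType) (s : seq T) (x0 : T) (P : pred nat) : uniq s ->
  count (fun e => P (index e s)) s = count P (iota 0 (size s)).
Proof.
move=> us.
transitivity (count (fun e => P (index e s)) (mkseq (nth x0 s) (size s))).
  by rewrite mkseq_nth.
rewrite /mkseq count_map; apply: eq_in_count => t; rewrite mem_iota => /andP [_ ht] /=.
by rewrite index_uniq.
Qed.

Theorem lemma3p3 (V E : finType) (ends : E -> V * V) :
  loopless ends ->
  exists F : 'I_(maxdeg ends) -> {set E},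
    (forall i, is_forest ends (F i)) /\
    (forall i, #|F i| = #|E| %/ maxdeg ends \/
               #|F i| = (#|E| + maxdeg ends - 1) %/ maxdeg ends) /\
    (forall i j, i != j -> [disjoint F i & F j]) /\
    (forall e : E, exists i, e \in F i).
Proof.
move=> hl.
exists (fun i : 'I_(maxdeg ends) => [set e | index e (sq ends) %% maxdeg ends == i]).
split; first by move=> i; apply: forestF.
split.
  move=> i; have d0 : 0 < maxdeg ends by apply: leq_ltn_trans (ltn_ord i).
  have -> : #|[set e | index e (sq ends) %% maxdeg ends == i]| = #|E| %/ maxdeg ends + (i < #|E| %% maxdeg ends).
    case: (posnP #|E|) => hE.
      rewrite hE div0n mod0n addn0; apply/eqP; rewrite -leqn0 -hE.
      by apply: subset_leq_card; apply/subsetP.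
    have [x0 _] : exists x0 : E, true.
      by move: hE => /card_gt0P [x _]; exists x.
    rewrite cardsE cardE /enum_mem size_filter -enumT.
    rewrite -(permP (sq_perm ends)) /=.
    rewrite (@count_index _ _ x0 (fun t => t %% maxdeg ends == i)) ?sq_uniq //.
    by rewrite size_sq count_mod_iota.
  case: (ltnP i (#|E| %% maxdeg ends)) => h; last by left; rewrite addn0.
  right; rewrite ceil_eq //; exact: leq_ltn_trans h.
split.
  move=> i j ij; apply/pred0P => e /=; rewrite !inE.
  apply/negP => /andP [/eqP h1 /eqP h2]; move: ij.
  by rewrite -(inj_eq val_inj) /= -h1 -h2 eqxx.
move=> e.
have d0 : 0 < maxdeg ends.
  apply: leq_trans (deg_le ends (ends e).1).
  rewrite /deg card_gt0; apply/set0Pn; exists e; by rewrite inE eqxx.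
exists (Ordinal (ltn_pmod (index e (sq ends)) d0)).
by rewrite inE.
Qed.
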